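(* In the setting described in the context, $\mathcal{V}(X)<\infty$ for every $X\in\mathcal{K}(\mathbb{R}^n)$ with $X\cap\mathcal{D}_{\mathcal{A}}\neq\emptyset$.
   Context: Let $\|\cdot\|$ be a norm on $\mathbb{R}^n$ and $\mathrm{dist}(x,\Omega):=\inf_{y\in\Omega}\|x-y\|$. Let $\mathcal{K}(\mathbb{R}^n)$ denote the nonempty compact subsets of $\mathbb{R}^n$. Consider $x_{k+1}=f(x_k,u_k)$ with $f:\mathbb{R}^n\times\mathbb{R}^m\to\mathbb{R}^n$ continuous and inputs $u_k\in U$, $U\subset\mathbb{R}^m$ nonempty compact. For $x\in\mathbb{R}^n$ and $\pi:\mathbb{Z}_+\to U$, $\varphi_x^\pi(0)=x$, $\varphi_x^\pi(k+1)=f(\varphi_x^\pi(k),\pi(k))$; $\mathcal{R}(X,k):=\{\varphi_x^\pi(k):x\in X,\pi\in U^{\mathbb{Z}_+}\}$. Let $\mathcal{A}\in\mathcal{K}(\mathbb{R}^n)$ be controlled invariant. Assume local $\ell_p$-stabilizability: there exist $r>0$, $M\ge1$, $p>0$, $\lambda:[0,r]\times\mathbb{Z}_+\to\mathbb{R}_+$ such that (1) for each $k$, $s\mapsto\lambda(s,k)$ is continuous, nondecreasing, $\lambda(0,k)=0$; for each $s$, $k\mapsto\lambda(s,k)$ is nonincreasing, $\lambda(s,0)\le s$; (2) $\sum_{k}\lambda(r,k)^p<\infty$; (3) for every $x$ with $\mathrm{dist}(x,\mathcal{A})\le r$ there is $\pi\in U^{\mathbb{Z}_+}$ with $\mathrm{dist}(\varphi_x^\pi(k),\mathcal{A})\le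 M\lambda(\mathrm{dist}(x,\mathcal{A}),k)$ for all $k$. Let $\mathcal{D}_{\mathcal{A}}:=\{x:\exists\pi\in U^{\mathbb{Z}_+},\ \lim_{k\to\infty}\mathrm{dist}(\varphi_x^\pi(k),\mathcal{A})=0\}$. Let $\alpha:\mathbb{R}^n\to\mathbb{R}_+$ be continuous with $\underline{\alpha}\,\mathrm{dist}(x,\mathcal{A})^{\bar p}\le\alpha(x)\le\overline{\alpha}\,\mathrm{dist}(x,\mathcal{A})^{\bar p}$, constants $\underline{\alpha},\overline{\alpha}>0$, $\bar p\ge p$. Define $\Psi(X):=\inf_{y\in X}\alpha(y)$ and $\mathcal{V}(X):=\sum_{k=0}^\infty\Psi(\mathcal{R}(X,k))\in[0,\infty]$. *)

(* Defs.v *)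
From HB Require Import structures.
From mathcomp Require Import all_boot all_order all_algebra.
From mathcomp Require Import all_classical all_reals all_analysis.
Set Implicit Arguments. Unset Strict Implicit. Unset Printing Implicit Defensive.
Import Order.TTheory GRing.Theory Num.Theory.
Import numFieldNormedType.Exports.
Local Open Scope classical_set_scope.
Local Open Scope ring_scope.

Section Defs.
Variable R : realType.

Definition is_norm (n : nat) (nrm : 'rV[R]_n -> R) : Prop :=
  [/\ (forall x, nrm x = 0 -> x = 0),
      (forall (a : R) x, nrm (a *: x) = `|a| * nrm x) &
      (forall x y, nrm (x + y) <= nrm x + nrm y)].

Definition dist (n : nat) (nrm : 'rV[R]_n -> R) (x : 'rV[R]_n)
  (Om : set 'rV[R]_n) : R :=
  inf [set nrm (x - y) | y in Om].

Fixpoint traj (n m : nat) (f : 'rV[R]_n -> 'rV[R]_m -> 'rV[R]_n)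
  (x : 'rV[R]_n) (pi : nat -> 'rV[R]_m) (k : nat) : 'rV[R]_n :=
  match k with
  | 0%N => x
  | k'.+1 => f (traj f x pi k') (pi k')
  end.

Definition admissible (m : nat) (U : set 'rV[R]_m) (pi : nat -> 'rV[R]_m) :=
  forall k, U (pi k).

Definition reach (n m : nat) (f : 'rV[R]_n -> 'rV[R]_m -> 'rV[R]_n)
  (U : set 'rV[R]_m) (X : set 'rV[R]_n) (k : nat) : set 'rV[R]_n :=
  [set z | exists x, exists pi, [/\ X x, admissible U pi & z = traj f x pi k]].

Definition controlled_invariant (n m : nat)
  (f : 'rV[R]_n -> 'rV[R]_m -> 'rV[R]_n) (U : set 'rV[R]_m)
  (A : set 'rV[R]_n) : Prop :=
  forall x, A x -> exists u, U u /\ A (f x u).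

Definition attr_domain (n m : nat) (nrm : 'rV[R]_n -> R)
  (f : 'rV[R]_n -> 'rV[R]_m -> 'rV[R]_n) (U : set 'rV[R]_m)
  (A : set 'rV[R]_n) : set 'rV[R]_n :=
  [set x | exists pi, admissible U pi /\
     (fun k => dist nrm (traj f x pi k) A) @ \oo --> (0 : R)].

Definition lp_stabilizable (n m : nat) (nrm : 'rV[R]_n -> R)
  (f : 'rV[R]_n -> 'rV[R]_m -> 'rV[R]_n) (U : set 'rV[R]_m)
  (A : set 'rV[R]_n) (r M p : R) (lam : R -> nat -> R) : Prop :=
  0 < r /\ 1 <= M /\ 0 < p /\
      (forall s k, 0 <= s <= r -> 0 <= lam s k) /\
      (forall k, {within `[0, r], continuous (fun s => lam s k)}) /\
      (forall k s t, 0 <= s -> s <= t -> t <= r -> lam s k <= lam t k) /\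
      (forall k, lam 0 k = 0) /\
      (forall s k l, 0 <= s <= r -> (k <= l)%N -> lam s l <= lam s k) /\
      (forall s, 0 <= s <= r -> lam s 0%N <= s) /\
      ((\sum_(0 <= k <oo) ((lam r k `^ p)%:E)) < +oo)%E /\
      (forall x, dist nrm x A <= r ->
         exists pi, admissible U pi /\
           forall k, dist nrm (traj f x pi k) A <= M * lam (dist nrm x A) k).

Definition Psi (n : nat) (alpha : 'rV[R]_n -> R) (X : set 'rV[R]_n) : R :=
  inf [set alpha y | y in X].

Definition Vfun (n m : nat) (f : 'rV[R]_n -> 'rV[R]_m -> 'rV[R]_n)
  (U : set 'rV[R]_m) (alpha : 'rV[R]_n -> R) (X : set 'rV[R]_n) : \bar R :=
  (\sum_(0 <= k <oo) (Psi alpha (reach f U X k))%:E)%E.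

End Defs.

(* Main.v *)
Require Import Defs.
From HB Require Import structures.
From mathcomp Require Import all_boot all_order all_algebra.
From mathcomp Require Import all_classical all_reals all_analysis.
Import Order.TTheory GRing.Theory Num.Theory.
Import numFieldNormedType.Exports.
Local Open Scope classical_set_scope.
Local Open Scope ring_scope.


Section H.
Variable R : realType.

Lemma nrm_ge0 (n : nat) (nrm : 'rV[R]_n -> R) : is_norm nrm -> forall x, 0 <= nrm x.
Proof.
case=> _ hom tri x.
have h0 : nrm 0 = 0 by rewrite -(scale0r (0 : 'rV[R]_n)) hom normr0 mul0r.
have hN : nrm (- x) = nrm x by rewrite -scaleN1r hom normrN normr1 mul1r.
have := tri x (- x); rewrite subrr h0 hN => h.
by rewrite -(@pmulr_rge0 _ 2) // mulr2n mulrDl !mul1r.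
Qed.

Lemma dist_ge0 (n : nat) (nrm : 'rV[R]_n -> R) x (A : set 'rV[R]_n) :
  is_norm nrm -> A !=set0 -> 0 <= dist nrm x A.
Proof.
move=> hn [a Aa]; apply: lb_le_inf; first by exists (nrm (x - a)), a.
by move=> _ [y _ <-]; apply: nrm_ge0.
Qed.

Lemma traj_eq (n m : nat) (f : 'rV[R]_n -> 'rV[R]_m -> 'rV[R]_n) x pi pi' K :
  (forall j, (j < K)%N -> pi j = pi' j) -> forall k, (k <= K)%N ->
  traj f x pi k = traj f x pi' k.
Proof.
move=> h; elim=> [//|k ih] hk /=.
by rewrite ih ?(ltnW hk) // h.
Qed.

Lemma traj_shift (n m : nat) (f : 'rV[R]_n -> 'rV[R]_m -> 'rV[R]_n) x pi K k :
  traj f x pi (k + K) = traj f (traj f x pi K) (fun j => pi (j + K)%N) k.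
Proof. by elim: k => [//|k ih]; rewrite addSn /= ih. Qed.

End H.

Theorem lemma5 (R : realType) (n m : nat) (nrm : 'rV[R]_n -> R)
  (f : 'rV[R]_n -> 'rV[R]_m -> 'rV[R]_n) (U : set 'rV[R]_m)
  (A : set 'rV[R]_n) (r M p : R) (lam : R -> nat -> R)
  (alpha : 'rV[R]_n -> R) (alo ahi pbar : R) :
  is_norm nrm ->
  continuous (fun xu : 'rV[R]_n * 'rV[R]_m => f xu.1 xu.2) ->
  compact U -> U !=set0 ->
  compact A -> A !=set0 ->
  controlled_invariant f U A ->
  lp_stabilizable nrm f U A r M p lam ->
  continuous alpha ->
  (forall x, 0 <= alpha x) ->
  0 < alo -> 0 < ahi -> p <= pbar ->
  (forall x, alo * dist nrm x A `^ pbar <= alpha x /\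
             alpha x <= ahi * dist nrm x A `^ pbar) ->
  forall X : set 'rV[R]_n, compact X -> X !=set0 ->
  X `&` attr_domain nrm f U A !=set0 ->
  (Vfun f U alpha X < +oo)%E.
Proof.
move=> hn _ _ [u0 Uu0] _ A0 _ [r0 [M1 [p0 [lam0 [_ [lammono [_ [lamk [lamr [lsum lstab]]]]]]]]]].
move=> _ alpha0 _ ahi0 ppbar halpha X _ [x1 X1] [x0 [Xx0 [pi0 [adm0 cv0]]]].
have reach_ne k : reach f U X k !=set0.
  exists (traj f x1 (fun=> u0) k); rewrite /reach /=; exists x1, (fun=> u0); split => //.
have Psi0 k : 0 <= Psi alpha (reach f U X k).
  rewrite /Psi; apply: lb_le_inf; first by case: (reach_ne k) => z Hz; exists (alpha z), z.
  by move=> _ [y _ <-].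
have Psi_le k z : reach f U X k z -> Psi alpha (reach f U X k) <= alpha z.
  move=> Hz; rewrite /Psi; apply: ge_inf; last by exists z.
  by exists 0 => _ [y _ <-].
have [K HK] : exists K, dist nrm (traj f x0 pi0 K) A <= r.
  move/cvgrPdist_le: cv0 => /(_ r r0) [N _ HN].
  exists N; have := HN N (leqnn N); rewrite /= sub0r normrN.
  by move/(le_trans (ler_norm _)).
set y := traj f x0 pi0 K.
have y0 : 0 <= dist nrm y A by apply: dist_ge0.
have [pi1 [adm1 Hpi1]] := lstab y HK.
pose pi := fun j => if (j < K)%N then pi0 j else pi1 (j - K)%N.
have admpi : admissible U pi by move=> j; rewrite /pi; case: ifP.
have trajK : traj f x0 pi K = y.
  apply: (@traj_eq _ _ _ f x0 pi pi0 K) => // j jK.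
  by rewrite /pi jK.
have trajS i : traj f x0 pi (i + K) = traj f y pi1 i.
  rewrite traj_shift trajK; congr traj; apply: funext => j.
  by rewrite /pi ltnNge leq_addl /= addnK.
have lr i : 0 <= lam r i <= r.
  have hr : 0 <= r <= r by rewrite lexx ltW.
  apply/andP; split; first exact: lam0.
  exact: le_trans (lamk _ _ _ hr (leq0n i)) (lamr _ hr).
pose C := ahi * M `^ pbar * r `^ (pbar - p).
have C0 : 0 <= C by rewrite /C !mulr_ge0 ?powR_ge0 // ltW.
have key i : Psi alpha (reach f U X (i + K)) <= C * lam r i `^ p.
  set z := traj f y pi1 i.
  have zR : reach f U X (i + K) z by exists x0, pi; split => //; rewrite trajS.
  apply: le_trans (Psi_le _ _ zR) _.
  apply: le_trans (proj2 (halpha z)) _.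
  have pb0 : 0 <= pbar by apply: le_trans ppbar; apply: ltW.
  have z0 : 0 <= dist nrm z A by apply: dist_ge0.
  have [li0 lir] := andP (lr i).
  have hzl : dist nrm z A <= M * lam r i.
    apply: le_trans (Hpi1 i) _; apply: ler_wpM2l; first by apply: le_trans M1.
    by apply: lammono.
  have M0 : 0 <= M by apply: le_trans M1.
  have h1 : dist nrm z A `^ pbar <= (M * lam r i) `^ pbar.
    by apply: ge0_ler_powR => //; rewrite nnegrE // mulr_ge0.
  rewrite /C -!mulrA; apply: ler_wpM2l; first exact: ltW.
  apply: le_trans h1 _; rewrite powRM //; apply: ler_wpM2l; first exact: powR_ge0.
  have -> : lam r i `^ pbar = lam r i `^ p * lam r i `^ (pbar - p).
    rewrite -powRD; first by rewrite addrC subrK.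
    apply/implyP => /eqP; rewrite addrC subrK => h.
    by move: (lt_le_trans p0 ppbar); rewrite h ltxx.
  rewrite mulrC; apply: ler_wpM2r; first exact: powR_ge0.
  by apply: ge0_ler_powR => //; rewrite ?subr_ge0 // nnegrE // ltW.
rewrite /Vfun (@nneseries_split _ _ 0 K); last by move=> k _; rewrite lee_fin.
rewrite add0n -nneseries_addn; last by move=> k; rewrite lee_fin.
apply: lte_add_pinfty; first by rewrite sumEFin ltry.
apply: (@le_lt_trans _ _ (\sum_(0 <= i <oo) (C%:E * (lam r i `^ p)%:E))%E).
  apply: lee_nneseries => [k _ _|k _]; first by rewrite lee_fin.
  by rewrite -EFinM lee_fin.
rewrite nneseriesZl; last by move=> k _; rewrite lee_fin powR_ge0.
by apply: lte_mul_pinfty => //; rewrite lee_fin.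
Qed.
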